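(* Let $R$ be a $\Gamma$-ring and $r\in R[2]$ a formal difference law in $R$. Then $(p^2_1(r))^2=1$ in $R[1]$, and the element $w=p^3_2\circ p^4_2(r^2)\in R[2]$ is a formal sum law in $R$. Moreover, if $R$ is discrete, the multiplicative map $H\mathbb{N}\to R$ determined by $w$ (sending $1_{2^n}\mapsto w^n$) equals the composite of the inclusion $H\mathbb{N}\to H\mathbb{Z}$ with the multiplicative map $H\mathbb{Z}\to R$ determined by $r$ (sending $\pm1_n\mapsto r^n$).
   Context: Let $[n]=\{0,1,\dots,n\}$, pointed at $0$. A $\Gamma$-space is a functor $F$ from the finite pointed sets $[n]$ (with pointed maps) to pointed simplicial sets with $F[0]$ a point; for a pointed map $f$ we write $f$ also for $F(f)$; $\Sigma_n$ acts on $F[n]$ via permutations of $\{1,\dots,n\}$. We identify $[n]\wedge[m]$ with $[nm]$ via $i\wedge j\mapsto (j-1)n+i$. A $\Gamma$-ring is a $\Gamma$-space $R$ with unit $1\in R[1]$ (image of the unit map $\eta$) and associative unital multiplication given by natural maps $R(K)\wedge R(L)\to R(K\wedge L)$, $p\wedge q\mapsto pq$; it is discrete if all $R(K)$ are sets; $0\in R[1]$ denotes the basepoint. For $x\in R[2]$, $x^k\in R[2^k]$ is the $k$-fold product. Maps: $p^n_i:[n]\to[n-1]$, $p^n_i(j)=j$ ($j<i$), $p^n_i(i)=0$, $p^n_i(j)=j-1$ ($j>i$); for $1\le i<j\le n$ and $1\le k\le n-1$, $s^n_{i,j,k}:[n]\to[n-1]$ sends $0\mapsto0$, $i,j\mapsto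 k$, and the remaining elements order-preservingly and bijectively onto $\{1,\dots,n-1\}\setminus\{k\}$; $d^n_j:[n-1]\to[n]$ is the order-preserving injection missing $j$. $H\mathbb{Z}$ (resp. $H\mathbb{N}$) is the $\Gamma$-ring with $H\mathbb{Z}(K)$ the reduced free abelian group (resp. free commutative monoid) on $K$, pointed maps acting by summing coefficients along fibres, unit the inclusion of generators, multiplication $(\sum a_k k)(\sum b_l l)=\sum a_kb_l (k\wedge l)$. $1_n=(1,\dots,1)\in H\mathbb N[n]$ and $\pm1_n=(1,-1)^n\in H\mathbb{Z}[2^n]$. For $k\ge1$, split $\{1,\dots,2^k\}=A_+\sqcup A_-$ where $i\in A_+$ iff the binary expansion of $i-1$ has an even number of digits $1$ (so $\pm1_k$ has entry $1$ on $A_+$ and $-1$ on $A_-$). The special action of $\Sigma_{2^{k-1}}\times\Sigma_{2^{k-1}}$ on $F[2^k]$ is the action of the group of permutations of $\{1,\dots,2^k\}$ preserving $A_+$ and $A_-$. Let $\sigma$ be the nontrivial element of $\Sigma_2$. A formal sum law in $R$ is $w\in R[2]$ with $p^2_1(w)=p^2_2(w)=1$ and $w^k$ fixed by $\Sigma_{2^k}$ for all $k\ge1$. A formal difference law in $R$ is $r\in R[2]$ such that: (1) $p^2_2(r)=1$ and $s^2_{1,2,1}(r)=0$; (2) $p^2_1(r)\,r=r\,p^2_1(r)=\sigma(r)$ in $R[2]$; (3) for every $k\ge1$, $r^k$ is fixed under the special action of $\Sigma_{2^{k-1}}\times\Sigma_{2^{k-1}}$; (4) for every $k\ge1$, all $1\le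 i<j\le 2^k$ with one of $i,j$ in $A_+$ and the other in $A_-$, and all $1\le l\le 2^k-1$: $s^{2^k}_{i,j,l}(r^k)=d^{2^k-1}_l\,p^{2^k-1}_i\,p^{2^k}_j(r^k)$. *)

(* Defs.v *)
From HB Require Import structures.
From mathcomp Require Import all_boot all_algebra.
Set Implicit Arguments. Unset Strict Implicit. Unset Printing Implicit Defensive.
Import GRing.Theory.

(* ---------- finite pointed sets [n] = 'I_n.+1, pointed at ord0 ---------- *)

Definition ptd_map n m (f : {ffun 'I_n.+1 -> 'I_m.+1}) : Prop := f ord0 = ord0.

Definition mono_map k l (f : {ffun 'I_k.+1 -> 'I_l.+1}) : Prop :=
  forall a b : 'I_k.+1, a <= b -> f a <= f b.

(* turning a nat function into a map [n] -> [m] (out-of-range values go to 0) *)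
Definition mkmap n m (f : nat -> nat) : {ffun 'I_n.+1 -> 'I_m.+1} :=
  [ffun t : 'I_n.+1 => inord (f t)].

(* the "identity" [a] -> [b]; used to transport along a = b (e.g. n*m*p = n*(m*p)) *)
Definition relabel a b : {ffun 'I_a.+1 -> 'I_b.+1} := mkmap a b id.

(* f /\ g : [n] /\ [m] -> [n'] /\ [m'], with [n] /\ [m] = [nm] via
   i /\ j |-> (j-1) n + i *)
Definition smash n m n' m' (f : {ffun 'I_n.+1 -> 'I_n'.+1})
    (g : {ffun 'I_m.+1 -> 'I_m'.+1}) : {ffun 'I_(n * m).+1 -> 'I_(n' * m').+1} :=
  mkmap (n * m) (n' * m') (fun t =>
    if t == 0 then 0 else
    let i := (t.-1 %% n).+1 in
    let j := (t.-1 %/ n).+1 in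
    let fi := nat_of_ord (f (inord i)) in
    let gj := nat_of_ord (g (inord j)) in
    if (fi == 0) || (gj == 0) then 0 else gj.-1 * n' + fi).

(* gs_obj n k = k-simplices of F[n];  gs_sact = simplicial operators
   (contravariant in Delta), gs_gact = F(f) for pointed f : [n] -> [m]. *)
Record GammaSpace := {
  gs_obj : nat -> nat -> Type;
  gs_pt : forall n k, gs_obj n k;
  gs_sact : forall n k l, {ffun 'I_k.+1 -> 'I_l.+1} -> gs_obj n l -> gs_obj n k;
  gs_gact : forall n m k, {ffun 'I_n.+1 -> 'I_m.+1} -> gs_obj n k -> gs_obj m k;
  gs_sact_id : forall n k (x : gs_obj n k), gs_sact [ffun t => t] x = x;
  gs_sact_comp : forall n k l p (f : {ffun 'I_k.+1 -> 'I_l.+1})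
      (g : {ffun 'I_l.+1 -> 'I_p.+1}) (x : gs_obj n p),
      mono_map f -> mono_map g ->
      gs_sact [ffun t => g (f t)] x = gs_sact f (gs_sact g x);
  gs_sact_pt : forall n k l (f : {ffun 'I_k.+1 -> 'I_l.+1}),
      mono_map f -> gs_sact f (gs_pt n l) = gs_pt n k;
  gs_gact_id : forall n k (x : gs_obj n k), gs_gact [ffun t => t] x = x;
  gs_gact_comp : forall n m p k (f : {ffun 'I_n.+1 -> 'I_m.+1})
      (g : {ffun 'I_m.+1 -> 'I_p.+1}) (x : gs_obj n k),
      ptd_map f -> ptd_map g ->
      gs_gact [ffun t => g (f t)] x = gs_gact g (gs_gact f x);
  gs_gact_pt : forall n m k (f : {ffun 'I_n.+1 -> 'I_m.+1}),
      ptd_map f -> gs_gact f (gs_pt n k) = gs_pt m k;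
  gs_gact_sact : forall n m k l (f : {ffun 'I_n.+1 -> 'I_m.+1})
      (th : {ffun 'I_k.+1 -> 'I_l.+1}) (x : gs_obj n l),
      ptd_map f -> mono_map th ->
      gs_gact f (gs_sact th x) = gs_sact th (gs_gact f x);
  gs_zero : forall k (x : gs_obj 0 k), x = gs_pt 0 k
}.

Arguments gs_pt g n k : rename.
Arguments gs_sact {g n k l} f x : rename.
Arguments gs_gact {g n m k} f x : rename.

Definition cst k : {ffun 'I_k.+1 -> 'I_1} := [ffun _ => ord0].

Record GammaRing := {
  gr_sp :> GammaSpace;
  gr_one : gs_obj gr_sp 1 0;
  gr_mul : forall n m k, gs_obj gr_sp n k -> gs_obj gr_sp m k -> gs_obj gr_sp (n * m) k;
  gr_mul_ptl : forall n m k (y : gs_obj gr_sp m k),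
      gr_mul (gs_pt gr_sp n k) y = gs_pt gr_sp (n * m) k;
  gr_mul_ptr : forall n m k (x : gs_obj gr_sp n k),
      gr_mul x (gs_pt gr_sp m k) = gs_pt gr_sp (n * m) k;
  gr_mul_sact : forall n m k l (th : {ffun 'I_k.+1 -> 'I_l.+1})
      (x : gs_obj gr_sp n l) (y : gs_obj gr_sp m l),
      mono_map th -> gs_sact th (gr_mul x y) = gr_mul (gs_sact th x) (gs_sact th y);
  gr_mul_nat : forall n m n' m' k (f : {ffun 'I_n.+1 -> 'I_n'.+1})
      (g : {ffun 'I_m.+1 -> 'I_m'.+1}) (x : gs_obj gr_sp n k) (y : gs_obj gr_sp m k),
      ptd_map f -> ptd_map g ->
      gs_gact (@smash n m n' m' f g) (gr_mul x y) = gr_mul (gs_gact f x) (gs_gact g y);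
  gr_mul_assoc : forall n m p k (x : gs_obj gr_sp n k) (y : gs_obj gr_sp m k)
      (z : gs_obj gr_sp p k),
      gs_gact (relabel (n * m * p) (n * (m * p))) (gr_mul (gr_mul x y) z)
      = gr_mul x (gr_mul y z);
  gr_one_l : forall n k (x : gs_obj gr_sp n k),
      gs_gact (relabel (1 * n) n) (gr_mul (gs_sact (cst k) gr_one) x) = x;
  gr_one_r : forall n k (x : gs_obj gr_sp n k),
      gs_gact (relabel (n * 1) n) (gr_mul x (gs_sact (cst k) gr_one)) = x
}.

Arguments gr_one g : rename.
Arguments gr_mul {g n m k} x y : rename.

(* R discrete: every R[n] is (isomorphic to) a constant simplicial set *)
Definition discrete (R : GammaRing) : Prop :=
  forall n k, bijective (fun x : gs_obj R n 0 => gs_sact (cst k) x : gs_obj R n k).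

Fixpoint powR (R : GammaRing) n (x : gs_obj R n 0) (k : nat) : gs_obj R (n ^ k) 0 :=
  match k with
  | 0 => gs_gact (relabel 1 (n ^ 0)) (gr_one R)
  | k'.+1 => gs_gact (relabel (n ^ k' * n) (n ^ k'.+1)) (gr_mul (powR x k') x)
  end.

Definition pfun i t := if t < i then t else if t == i then 0 else t.-1.
Definition dfun j t := if t < j then t else t.+1.
Definition sfun i j k t :=
  if t == 0 then 0 else if (t == i) || (t == j) then k else
  let r := t - (i < t) - (j < t) in if r < k then r else r.+1.

Definition p_map n i := mkmap n (n - 1) (pfun i).
Definition d_map n j := mkmap (n - 1) n (dfun j).
Definition s_map n i j k := mkmap n (n - 1) (sfun i j k).
Definition swap2 := mkmap 2 2 (fun t => if t == 1 then 2 else if t == 2 then 1 else 0).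

(* A_+ : i in A_+ iff binary expansion of i-1 has an even number of 1s *)
Fixpoint popc (fuel n : nat) : nat :=
  match fuel with 0 => 0 | f.+1 => odd n + popc f n./2 end.
Definition popcount n := popc n n.
Definition Aplus (i : nat) : bool := ~~ odd (popcount i.-1).

Definition sym_fixed (R : GammaRing) N (x : gs_obj R N 0) : Prop :=
  forall s : {ffun 'I_N.+1 -> 'I_N.+1}, ptd_map s -> injective s ->
    gs_gact s x = x.

(* fixed by the special action of Sigma_{N/2} x Sigma_{N/2} *)
Definition special_fixed (R : GammaRing) N (x : gs_obj R N 0) : Prop :=
  forall s : {ffun 'I_N.+1 -> 'I_N.+1}, ptd_map s -> injective s ->
    (forall t : 'I_N.+1, Aplus (s t) = Aplus t) ->
    gs_gact s x = x.

Definition formal_sum_law (R : GammaRing) (w : gs_obj R 2 0) : Prop :=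
  [/\ gs_gact (p_map 2 1) w = gr_one R,
      gs_gact (p_map 2 2) w = gr_one R &
      forall k, 1 <= k -> sym_fixed (powR w k)].

Definition formal_difference_law (R : GammaRing) (r : gs_obj R 2 0) : Prop :=
  [/\ gs_gact (p_map 2 2) r = gr_one R /\ gs_gact (s_map 2 1 2 1) r = gs_pt R 1 0,
      gr_mul (gs_gact (p_map 2 1) r) r = gs_gact swap2 r /\
      gr_mul r (gs_gact (p_map 2 1) r) = gs_gact swap2 r,
      forall k, 1 <= k -> special_fixed (powR r k) &
      forall k, 1 <= k -> forall i j l,
        1 <= i -> i < j -> j <= 2 ^ k -> Aplus i != Aplus j ->
        1 <= l -> l <= 2 ^ k - 1 ->
        gs_gact (s_map (2 ^ k) i j l) (powR r k)
        = gs_gact (d_map (2 ^ k - 1) l)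
            (gs_gact (p_map (2 ^ k - 1) i) (gs_gact (p_map (2 ^ k) j) (powR r k)))].

Definition wOf (R : GammaRing) (r : gs_obj R 2 0) : gs_obj R 2 0 :=
  gs_gact (p_map 3 2) (gs_gact (p_map 4 2) (powR r 2)).

(* ---------- HN and HZ (discrete); element of H?[n] = coefficients on 1..n,
   stored 0-based: a t is the coefficient of t+1 ---------- *)
Definition fget (V : nmodType) n (a : {ffun 'I_n -> V}) (k : nat) : V :=
  if insub k is Some t then a t else 0%R.

Definition Hact (V : nmodType) n m (f : {ffun 'I_n.+1 -> 'I_m.+1})
    (a : {ffun 'I_n -> V}) : {ffun 'I_m -> V} :=
  [ffun s : 'I_m => (\sum_(t < n | nat_of_ord (f (inord t.+1)) == s.+1) a t)%R].

(* multiplication, with [n] /\ [m] = [nm], i /\ j |-> (j-1)n + i *)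
Definition Hmul (V : pzSemiRingType) n m (a : {ffun 'I_n -> V})
    (b : {ffun 'I_m -> V}) : {ffun 'I_(n * m) -> V} :=
  [ffun u : 'I_(n * m) => (fget a (u %% n) * fget b (u %/ n))%R].

Definition Hone (V : pzSemiRingType) : {ffun 'I_1 -> V} := [ffun _ => 1%R].
Definition Hcast (V : nmodType) a b (x : {ffun 'I_a -> V}) : {ffun 'I_b -> V} :=
  [ffun u : 'I_b => fget x u].
Fixpoint Hpow (V : pzSemiRingType) n (a : {ffun 'I_n -> V}) k : {ffun 'I_(n ^ k) -> V} :=
  match k with
  | 0 => Hcast (n ^ 0) (Hone V)
  | k'.+1 => Hcast (n ^ k'.+1) (Hmul (Hpow a k') a)
  end.

Definition onesN n : {ffun 'I_n -> nat} := [ffun _ => 1%N].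
Definition pm1 n : {ffun 'I_(2 ^ n) -> int} :=
  Hpow [ffun u : 'I_2 => if nat_of_ord u == 0 then 1%R else (-1)%R] n.

Definition incNZ n (a : {ffun 'I_n -> nat}) : {ffun 'I_n -> int} :=
  [ffun t => Posz (a t)].

(* a map of Gamma-rings HV -> R, for R discrete (so given on vertices) *)
Definition is_Hmap (V : pzSemiRingType) (R : GammaRing)
    (phi : forall n, {ffun 'I_n -> V} -> gs_obj R n 0) : Prop :=
  [/\ forall n, phi n [ffun _ => 0%R] = gs_pt R n 0,
      forall n m (f : {ffun 'I_n.+1 -> 'I_m.+1}) a,
        ptd_map f -> phi m (Hact f a) = gs_gact f (phi n a),
      forall n m a b, phi (n * m) (Hmul a b) = gr_mul (phi n a) (phi m b) &
      phi 1 (Hone V) = gr_one R].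

(* Main.v *)
Require Import Defs.
From mathcomp Require Import all_boot all_algebra.
From mathcomp Require Import zify.
Set Implicit Arguments. Unset Strict Implicit. Unset Printing Implicit Defensive.
Import GRing.Theory.

Section Basic.
Variable R : GammaRing.

Lemma ptd_mkmap n m f : f 0 = 0 -> ptd_map (mkmap n m f).
Proof. by move=> f0; rewrite /ptd_map /mkmap ffunE /= f0; apply: val_inj; rewrite /= inordK. Qed.

Lemma mkmap_ext n m f g : (forall t, t <= n -> f t = g t) -> mkmap n m f = mkmap n m g.
Proof. by move=> H; apply/ffunP => t; rewrite !ffunE H // -ltnS. Qed.

Lemma mkmap_val n m (F : {ffun 'I_n.+1 -> 'I_m.+1}) :
  F = mkmap n m (fun t => nat_of_ord (F (inord t))).
Proof. by apply/ffunP => t; rewrite ffunE !inord_val. Qed.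

Lemma gact_comp a b c (f g : nat -> nat) (x : gs_obj R c 0) :
  f 0 = 0 -> g 0 = 0 -> (forall t, t <= c -> g t <= a) ->
  gs_gact (mkmap a b f) (gs_gact (mkmap c a g) x) = gs_gact (mkmap c b (fun t => f (g t))) x.
Proof.
move=> f0 g0 H; rewrite -gs_gact_comp; try exact: ptd_mkmap.
congr gs_gact; apply/ffunP => t; rewrite !ffunE.
by rewrite inordK // ltnS H // -ltnS.
Qed.

Lemma gact_id a (f : nat -> nat) (x : gs_obj R a 0) :
  (forall t, t <= a -> f t = t) -> gs_gact (mkmap a a f) x = x.
Proof.
move=> H; rewrite -[RHS]gs_gact_id; congr gs_gact; apply/ffunP => t; rewrite !ffunE.
by apply: val_inj; rewrite /= H ?inordK // -ltnS.
Qed.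

Lemma relabel_inv a b (x : gs_obj R a 0) : a = b ->
  gs_gact (relabel b a) (gs_gact (relabel a b) x) = x.
Proof.
move=> e; rewrite /relabel gact_comp //; last by move=> t; rewrite e.
by apply: gact_id.
Qed.

Definition sm (n n' : nat) (f g : nat -> nat) (t : nat) :=
    if t == 0 then 0 else
    let i := (t.-1 %% n).+1 in
    let j := (t.-1 %/ n).+1 in
    if (f i == 0) || (g j == 0) then 0 else (g j).-1 * n' + f i.

Lemma smash_mkmap n m n' m' f g :
  0 < n -> (forall t, t <= n -> f t <= n') -> (forall t, t <= m -> g t <= m') ->
  smash (mkmap n n' f) (mkmap m m' g) = mkmap (n * m) (n' * m') (sm n n' f g).
Proof.
move=> n0 Hf Hg; apply/ffunP => t; rewrite !ffunE /sm.
move: (nat_of_ord t) (ltn_ord t) => u ut.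
case: (u =P 0) => // t0.
have t1 : u.-1 < n * m by case: u t0 ut => [|u] //= _ Ht.
have Hi : (u.-1 %% n).+1 <= n by rewrite ltn_pmod.
have Hj : (u.-1 %/ n).+1 <= m by rewrite ltn_divLR // mulnC.
by rewrite !ffunE !inordK ?ltnS ?Hf ?Hg.
Qed.

Lemma mul_nat n m n' m' f g (x : gs_obj R n 0) (y : gs_obj R m 0) :
  0 < n -> f 0 = 0 -> g 0 = 0 ->
  (forall t, t <= n -> f t <= n') -> (forall t, t <= m -> g t <= m') ->
  gr_mul (gs_gact (mkmap n n' f) x) (gs_gact (mkmap m m' g) y) =
  gs_gact (mkmap (n * m) (n' * m') (sm n n' f g)) (gr_mul x y).
Proof.
move=> n0 f0 g0 Hf Hg; rewrite -smash_mkmap // gr_mul_nat //; exact: ptd_mkmap.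
Qed.

Lemma sm_val n n' f g a b : a < n ->
  sm n n' f g (a + n * b).+1 =
  if (f a.+1 == 0) || (g b.+1 == 0) then 0 else (g b.+1).-1 * n' + f a.+1.
Proof.
move=> an; have n0 : 0 < n by case: n an.
by rewrite /sm /= addnC mulnC modnMDl divnMDl // divn_small // addn0 modn_small.
Qed.

Lemma decomp n m t : 0 < n -> 1 <= t <= n * m ->
  exists a b, [/\ a < n, b < m & t = (a + n * b).+1].
Proof.
move=> n0 /andP[t1 tn]; exists (t.-1 %% n), (t.-1 %/ n); split.
- by rewrite ltn_pmod.
- by rewrite ltn_divLR // mulnC; move: t1 tn; case: t.
- by move: t1 tn; case: t => //= t _ _; rewrite addnC mulnC -divn_eq.
Qed.

End Basic.

Section P1.
Variable R : GammaRing.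
Variable r : gs_obj R 2 0.
Hypothesis h1 : gs_gact (p_map 2 2) r = gr_one R.
Hypothesis h2 : gr_mul (gs_gact (p_map 2 1) r) r = gs_gact swap2 r.

Lemma part1 : gr_mul (gs_gact (p_map 2 1) r) (gs_gact (p_map 2 1) r) = gr_one R.
Proof.
set u := gs_gact (p_map 2 1) r.
have e1 : gs_gact (p_map 2 1) (gr_mul u r) = gr_mul u u.
  transitivity (gr_mul (gs_gact (mkmap 1 1 id) u) (gs_gact (mkmap 2 1 (pfun 1)) r)).
    rewrite mul_nat //; try by case=> [|[|[|]]].
    congr gs_gact; apply: mkmap_ext; by case=> [|[|[|]]].
  by rewrite gact_id.
rewrite -e1 h2 /swap2 /p_map gact_comp //; last by case=> [|[|[|]]].
rewrite -h1 /p_map; congr gs_gact; apply: mkmap_ext; by case=> [|[|[|]]].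
Qed.
End P1.

Section Unit.
Variable R : GammaRing.

Lemma cst0 : cst 0 = [ffun t => t].
Proof. by apply/ffunP => t; rewrite !ffunE (ord1 t). Qed.

Lemma one_l n (x : gs_obj R n 0) : gs_gact (mkmap (1 * n) n id) (gr_mul (gr_one R) x) = x.
Proof. by rewrite -{2}(gr_one_l x) cst0 gs_sact_id. Qed.

Lemma one_r n (x : gs_obj R n 0) : gs_gact (mkmap (n * 1) n id) (gr_mul x (gr_one R)) = x.
Proof. by rewrite -{2}(gr_one_r x) cst0 gs_sact_id. Qed.

Lemma powR1 n (x : gs_obj R n 0) : powR x 1 = x.
Proof.
rewrite /= [gs_gact (relabel 1 _) _]gact_id //.
exact: one_l.
Qed.

Definition qf t := pfun 2 (pfun 2 t).

Lemma W (r : gs_obj R 2 0) : wOf r = gs_gact (mkmap 4 2 qf) (gr_mul r r).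
Proof.
rewrite /wOf.
change (powR r 2) with (gs_gact (relabel (2^1*2) (2^2)) (gr_mul (powR r 1) r)).
rewrite powR1 /p_map /relabel gact_comp //; try by case=> [|[|[|[|[|]]]]].
rewrite gact_comp //; try by case=> [|[|[|[|[|]]]]].
Qed.

End Unit.

Section PW.
Variable R : GammaRing.
Variable r : gs_obj R 2 0.
Hypothesis h1 : gs_gact (p_map 2 2) r = gr_one R.
Hypothesis h2 : gr_mul (gs_gact (p_map 2 1) r) r = gs_gact swap2 r.

Lemma pw1 : gs_gact (p_map 2 1) (wOf r) = gr_one R.
Proof.
rewrite -(part1 h1 h2) W /p_map gact_comp //; try by case=> [|[|[|[|[|]]]]].
rewrite mul_nat //; try by case=> [|[|[|[|[|]]]]].
congr gs_gact; apply: mkmap_ext; by case=> [|[|[|[|[|]]]]].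
Qed.

Lemma pw2 : gs_gact (p_map 2 2) (wOf r) = gr_one R.
Proof.
rewrite -(one_l (gr_one R)) -h1 /p_map mul_nat //; try by case=> [|[|[|[|[|]]]]].
rewrite gact_comp //; try by case=> [|[|[|[|[|]]]]].
rewrite W gact_comp //; try by case=> [|[|[|[|[|]]]]].
congr gs_gact; apply: mkmap_ext; by case=> [|[|[|[|[|]]]]].
Qed.
End PW.

Lemma sm_id n t : 0 < n -> sm n n id id t = t.
Proof.
move=> n0; rewrite /sm; case: t => //= t.
by rewrite addnS -divn_eq.
Qed.

Lemma sm_id' n n' t : 0 < n -> n = n' -> sm n n' id id t = t.
Proof. by move=> n0 <-; apply: sm_id. Qed.

Section Assoc.
Variable R : GammaRing.
Variable r : gs_obj R 2 0.

Lemma assoc2 m :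
  gr_mul (powR r m) (gr_mul r r) = gs_gact (mkmap (2^m.+2) (2^m*(2*2)) id) (powR r m.+2).
Proof.
have n0 : 0 < 2 ^ m by rewrite expn_gt0.
have E : powR r m.+2 = gs_gact (mkmap (2^m*2*2) (2^m.+2) id) (gr_mul (gr_mul (powR r m) r) r).
  change (powR r m.+2) with (gs_gact (relabel (2^m.+1*2) (2^m.+2))
     (gr_mul (gs_gact (relabel (2^m*2) (2^m.+1)) (gr_mul (powR r m) r)) r)).
  transitivity (gs_gact (relabel (2^m.+1*2) (2^m.+2))
     (gr_mul (gs_gact (relabel (2^m*2) (2^m.+1)) (gr_mul (powR r m) r)) (gs_gact (mkmap 2 2 id) r))).
    by rewrite (gact_id (f := id)).
  rewrite /relabel mul_nat //; try by rewrite muln_gt0 n0.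
  all: try by move=> t; rewrite expnS mulnC.
  have e : 2 ^ m * 2 = 2 ^ m.+1 by rewrite expnS mulnC.
  have n1 : 0 < 2 ^ m * 2 by rewrite muln_gt0 n0.
  rewrite gact_comp //; last by move=> t Ht; rewrite sm_id' // -e.
  congr gs_gact; apply: mkmap_ext => t Ht; by rewrite sm_id'.
rewrite E gact_comp //; first by symmetry; exact: gr_mul_assoc.
by move=> t; rewrite -!mulnA !expnS mulnC mulnA.
Qed.
End Assoc.

Lemma popc0 f : popc f 0 = 0.
Proof. by elim: f => //= f ->. Qed.

Lemma half_le n f : n <= f.+1 -> n./2 <= f.
Proof. by rewrite leq_half_double; lia. Qed.

Lemma popc_enough f f' n : n <= f -> n <= f' -> popc f n = popc f' n.
Proof.
elim: f f' n => [|f IH] f' n.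
  by rewrite leqn0 => /eqP -> _; rewrite !popc0.
case: n => [|n] Hn Hn'; first by rewrite !popc0.
case: f' Hn' => [//|f'] Hn' /=; congr addn; apply: IH.
  exact: (half_le Hn).
exact: (half_le Hn').
Qed.

Lemma popcountE n : popcount n = odd n + popcount n./2.
Proof.
case: n => [//|n]; rewrite /popcount /=; congr addn; apply: popc_enough => //.
exact: (@half_le n.+1 n (leqnn _)).
Qed.

Lemma popcount_par m a b : a < 2 ^ m ->
  odd (popcount (a + 2 ^ m * b)) = odd (popcount a) (+) odd (popcount b).
Proof.
elim: m a => [|m IH] a.
  by rewrite expn0 ltnS leqn0 => /eqP ->; rewrite mul1n.
move=> Ha; rewrite popcountE [popcount a]popcountE.
have -> : (a + 2 ^ m.+1 * b)./2 = a./2 + 2 ^ m * b.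
  by rewrite -!divn2 expnS -mulnA addnC [2 * _]mulnC divnMDl // addnC.
rewrite !oddD IH; last by rewrite -divn2 ltn_divLR // -expnSr.
rewrite oddM expnS oddM /= addbF.
by case: (odd a); case: (odd (popcount (a./2))); case: (odd (popcount b)).
Qed.

Lemma Aplus_split m a b : a < 2 ^ m -> (b == 0) || (b == 3) ->
  Aplus (a + 2 ^ m * b).+1 = Aplus a.+1.
Proof.
move=> Ha Hb; rewrite /Aplus /= popcount_par //.
by case/orP: Hb => /eqP ->; rewrite addbF.
Qed.

Fixpoint Gk (k : nat) : nat -> nat :=
  match k with 0 => id | k'.+1 => sm (2 ^ k'.*2) (2 ^ k') (Gk k') qf end.

Lemma N_succ k : 2 ^ (k.+1).*2 = 2 ^ k.*2 * 4.
Proof. by rewrite doubleS !expnS mulnA mulnC. Qed.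

Lemma Gk0 k : Gk k 0 = 0.
Proof. by case: k. Qed.

Lemma G_step k a b : a < 2 ^ k.*2 ->
  Gk k.+1 (a + 2 ^ k.*2 * b).+1 =
  if (Gk k a.+1 == 0) || (qf b.+1 == 0) then 0 else (qf b.+1).-1 * 2 ^ k + Gk k a.+1.
Proof. by move=> Ha; rewrite /= sm_val. Qed.

Lemma G_decomp k t : 1 <= t <= 2 ^ k.+1.*2 ->
  exists a b, [/\ a < 2 ^ k.*2, b < 4 & t = (a + 2 ^ k.*2 * b).+1].
Proof. by rewrite N_succ; apply: decomp; rewrite expn_gt0. Qed.

Lemma G_P1 k t : t <= 2 ^ k.*2 -> Gk k t <= 2 ^ k.
Proof.
elim: k t => [|k IH] t; first by [].
case: t => [|t] Ht; first by rewrite Gk0.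
have [a [b [Ha Hb ->]]] := @G_decomp k t.+1 Ht.
rewrite G_step //.
have := IH a.+1 Ha; rewrite expnS.
by case: b Hb => [|[|[|[|b]]]] //= _; case: (Gk k a.+1 == 0) => //=; lia.
Qed.

Lemma G_P2 k u : 1 <= u <= 2 ^ k -> exists t, 1 <= t <= 2 ^ k.*2 /\ Gk k t = u.
Proof.
elim: k u => [|k IH] u.
  by move=> Hu; exists u; split => //; rewrite /=; lia.
move=> Hu; case: (leqP u (2 ^ k)) => Hu2.
  have [t [Ht Gt]] := IH u (andb_true_intro (conj (proj1 (andP Hu)) Hu2)).
  exists t; split; first by rewrite N_succ; lia.
  have -> : t = (t.-1 + 2 ^ k.*2 * 0).+1 by lia.
  rewrite G_step; last by lia.
  have -> : t.-1.+1 = t by lia.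
  by rewrite Gt /=; case: (u =P 0) => //; lia.
have Hu3 : 1 <= u - 2 ^ k <= 2 ^ k by move: Hu; rewrite expnS; lia.
have [t [Ht Gt]] := IH _ Hu3.
exists (t.-1 + 2 ^ k.*2 * 3).+1; split; first by rewrite N_succ; lia.
rewrite G_step; last by lia.
have -> : t.-1.+1 = t by lia.
rewrite Gt /=; case: (u - 2 ^ k =P 0) => /=; lia.
Qed.

Lemma G_P3 k t t' : t <= 2 ^ k.*2 -> t' <= 2 ^ k.*2 -> Gk k t = Gk k t' -> Gk k t != 0 -> t = t'.
Proof.
elim: k t t' => [|k IH] t t'; first by [].
case: t => [|t] Ht; first by rewrite Gk0.
case: t' => [|t'] Ht'; first by rewrite Gk0 => ->.
have [a [b [Ha Hb ->]]] := @G_decomp k t.+1 Ht.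
have [a' [b' [Ha' Hb' ->]]] := @G_decomp k t'.+1 Ht'.
rewrite !G_step //.
have P1 := G_P1 Ha; have P1' := G_P1 Ha'.
have I := IH a.+1 a'.+1 Ha Ha'.
case: b Hb => [|[|[|[|b]]]] //= _; case: b' Hb' => [|[|[|[|b']]]] //= _;
  case: (Gk k a.+1 =P 0) => //= G1; case: (Gk k a'.+1 =P 0) => //= G2;
  rewrite ?mul0n ?mul1n ?add0n => E _.
all: lia.
Qed.

Lemma G_P4 k t : 1 <= t <= 2 ^ k.*2 -> Gk k t != 0 -> Aplus t.
Proof.
elim: k t => [|k IH] t.
  by move=> /andP[H1 H2]; have -> : t = 1 by move: H2; rewrite expn0; lia.
move=> Ht; have [a [b [Ha Hb ->]]] := G_decomp Ht.
rewrite G_step //.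
case: b Hb => [|[|[|[|b]]]] //= _; case: (Gk k a.+1 =P 0) => //= G1 _.
- rewrite (Aplus_split (b := 0)) //; apply: IH; [lia | exact/eqP].
- rewrite (Aplus_split (b := 3)) //; apply: IH; [lia | exact/eqP].
Qed.

Section L.
Variable R : GammaRing.
Variable r : gs_obj R 2 0.

Lemma qf_range t : t <= 4 -> qf t <= 2.
Proof. by case: t => [|[|[|[|[|]]]]]. Qed.

Lemma powW k : powR (wOf r) k = gs_gact (mkmap (2 ^ k.*2) (2 ^ k) (Gk k)) (powR r k.*2).
Proof.
elim: k => [|k IH]; first by symmetry; apply: gact_id.
change (powR (wOf r) k.+1) with
  (gs_gact (relabel (2^k*2) (2^k.+1)) (gr_mul (powR (wOf r) k) (wOf r))).
rewrite IH W mul_nat //; last first.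
- exact: qf_range.
- exact: G_P1.
- exact: Gk0.
- by rewrite expn_gt0.
rewrite /relabel gact_comp //; last first.
  by move=> t Ht; rewrite -expnSr; apply: (@G_P1 k.+1); rewrite N_succ.
rewrite assoc2 gact_comp //; move=> t; rewrite -N_succ; exact: id.
Qed.
End L.

Section Sym.
Variable R : GammaRing.

Lemma sym_from_special N M (G : nat -> nat) (x : gs_obj R N 0) :
  G 0 = 0 -> (forall t, t <= N -> G t <= M) ->
  (forall u, 1 <= u <= M -> exists t, 1 <= t <= N /\ G t = u) ->
  (forall t t', t <= N -> t' <= N -> G t = G t' -> G t != 0 -> t = t') ->
  (forall t, 1 <= t <= N -> G t != 0 -> Aplus t) ->
  special_fixed x -> sym_fixed (gs_gact (mkmap N M G) x).
Proof.
move=> G0 GP1 GP2 GP3 GP4 sx s ps si.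
pose sf t := nat_of_ord (s (inord t)).
have sf0 : sf 0 = 0.
  rewrite /sf; have -> : (inord 0 : 'I_M.+1) = ord0 by apply: val_inj; rewrite /= inordK.
  by rewrite ps.
have sfM u : sf u <= M by rewrite /sf -ltnS.
have sfI u v : u <= M -> v <= M -> sf u = sf v -> u = v.
  move=> uM vM /val_inj /si /(congr1 (@nat_of_ord _)); rewrite !inordK // ltnS.
have sfnz u : 1 <= u <= M -> sf u != 0.
  move=> /andP[u1 uM]; apply/eqP => e.
  by have := sfI u 0 uM (leq0n _); rewrite sf0 => /(_ e); lia.
pose E u := find (fun t => G t == u) (iota 0 N.+1).
have EP u : 1 <= u <= M -> E u <= N /\ G (E u) = u.
  move=> Hu; have [t [Ht Gt]] := GP2 u Hu.
  have hasP : has (fun t => G t == u) (iota 0 N.+1).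
    by apply/hasP; exists t; [rewrite mem_iota; lia | apply/eqP].
  have Ei : E u < size (iota 0 N.+1) by rewrite -has_find.
  rewrite size_iota in Ei; split; first by rewrite -ltnS.
  have := nth_find 0 hasP; rewrite nth_iota // add0n => /eqP.
  done.
pose T t := if G t != 0 then E (sf (G t)) else t.
have T0 : T 0 = 0 by rewrite /T G0.
have TG t : t <= N -> T t <= N /\ G (T t) = sf (G t).
  move=> Ht; rewrite /T; case: (G t =P 0) => [-> | /eqP Gt] /=; first by rewrite sf0.
  have Hu : 1 <= G t <= M by rewrite GP1 // andbT lt0n.
  by apply: EP; rewrite sfM andbT lt0n sfnz.
have Tinj t t' : t <= N -> t' <= N -> T t = T t' -> t = t'.
  move=> Ht Ht' e.
  have [_ e1] := TG t Ht; have [_ e2] := TG t' Ht'.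
  have e3 : sf (G t) = sf (G t') by rewrite -e1 -e2 e.
  have e4 : G t = G t' by apply: sfI => //; apply: GP1.
  case: (G t =P 0) => [z | /eqP nz]; last exact: GP3.
  by move: e; rewrite /T z -e4 z.
have TA t : t <= N -> Aplus (T t) = Aplus t.
  move=> Ht; rewrite /T; case: ifP => nz; last by [].
  have [H1 H2] := TG t Ht.
  have HT : T t = E (sf (G t)) by rewrite /T nz.
  rewrite HT in H1 H2.
  have t1 : 0 < t.
    move: nz; case: (t) => [|n] //. by rewrite G0.
  have Gu : 0 < G t <= M by rewrite GP1 // andbT lt0n.
  have nzE : G (E (sf (G t))) != 0 by rewrite H2 sfnz.
  have e1 : 0 < E (sf (G t)).
    move: nzE; case: (E (sf (G t))) => [|n]; last by [].
    by rewrite G0.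
  have A1 := GP4 _ (andb_true_intro (conj e1 H1)) nzE.
  have A2 := GP4 _ (andb_true_intro (conj t1 Ht)) nz.
  by rewrite A1 A2.
pose tau := mkmap N N T.
have ptau : ptd_map tau by apply: ptd_mkmap; exact: T0.
have TN (t : 'I_N.+1) : T t < N.+1 by rewrite ltnS; case: (TG t (ltn_ord t)).
have tauE (t : 'I_N.+1) : nat_of_ord (tau t) = T t by rewrite /tau ffunE inordK.
have itau : injective tau.
  move=> a b e; apply: val_inj.
  apply: (Tinj (val a) (val b)); [exact: ltn_ord a | exact: ltn_ord b | ].
  by rewrite -!tauE e.
have atau : forall t : 'I_N.+1, Aplus (tau t) = Aplus t.
  by move=> t; rewrite tauE; apply: TA; rewrite -ltnS.
rewrite -{2}(sx tau ptau itau atau) /tau gact_comp //; last first.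
  by move=> t Ht; case: (TG t Ht).
rewrite [s]mkmap_val gact_comp; last exact: GP1.
- congr gs_gact; apply: mkmap_ext => t Ht; by case: (TG t Ht).
- exact: sf0.
- exact: G0.
Qed.
End Sym.

Lemma fget_lt (V : nmodType) n (a : {ffun 'I_n -> V}) k (h : k < n) : fget a k = a (Ordinal h).
Proof. by rewrite /fget insubT. Qed.

Lemma fget_ge (V : nmodType) n (a : {ffun 'I_n -> V}) k : n <= k -> fget a k = 0%R.
Proof. by move=> h; rewrite /fget insubF // ltnNge h. Qed.

Lemma fget_inord (V : nmodType) n (a : {ffun 'I_n.+1 -> V}) k : k <= n -> fget a k = a (inord k).
Proof. by move=> h; rewrite (fget_lt _ (h : k < n.+1)); congr (a _); apply: val_inj; rewrite /= inordK. Qed.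

Lemma Hact_mkmap (V : nmodType) n m f (a : {ffun 'I_n -> V}) :
  (forall t, t <= n -> f t <= m) ->
  Hact (mkmap n m f) a = [ffun s : 'I_m => (\sum_(t < n | f t.+1 == s.+1) a t)%R].
Proof.
move=> H; apply/ffunP => s; rewrite !ffunE; apply: eq_bigl => t; rewrite !ffunE.
by rewrite !inordK // ltnS // H.
Qed.

Lemma pm1_test : Hact (p_map 3 2) (Hact (p_map 4 2) (pm1 2)) = incNZ (onesN 2).
Proof.
rewrite /p_map !Hact_mkmap; try by case=> [|[|[|[|[|]]]]].
apply/ffunP => -[[|[|//]] Hi]; rewrite !ffunE big_mkcond !big_ord_recl big_ord0 /=.
all: rewrite !ffunE big_mkcond !big_ord_recl big_ord0 /=.
all: rewrite /pm1 /=.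
all: rewrite !ffunE /=.
all: rewrite !fget_inord //.
all: rewrite !ffunE /= !inordK //.
all: rewrite /modn /divn /expn /bump /=.
all: rewrite !fget_inord // !ffunE /= !inordK // /modn /divn /expn /bump /=.
all: do 6 try rewrite !fget_inord //.
all: do 6 try rewrite !ffunE.
all: do 6 try rewrite !inordK //.
all: rewrite /modn /divn /expn /bump /=.
all: do 6 try rewrite !fget_inord //.
all: do 6 try rewrite !ffunE.
all: do 6 try rewrite !inordK //.
all: rewrite /modn /divn /expn /bump /=.
all: do 6 try rewrite !fget_inord //.
all: do 6 try rewrite !ffunE.
all: by [].
Qed.

Lemma Hact_inc n m (f : {ffun 'I_n.+1 -> 'I_m.+1}) (b : {ffun 'I_n -> nat}) :
  Hact f (incNZ b) = incNZ (Hact f b).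
Proof.
apply/ffunP => s; rewrite !ffunE.
rewrite (big_morph Posz PoszD (erefl (Posz 0))).
by apply: eq_bigr => t _; rewrite ffunE.
Qed.

Lemma Hmul_ones n m : 0 < n ->
  Hmul (incNZ (onesN n)) (incNZ (onesN m)) = incNZ (onesN (n * m)).
Proof.
move=> n0; apply/ffunP => u; rewrite !ffunE.
have h1 : u %% n < n by rewrite ltn_pmod.
have h2 : u %/ n < m by rewrite ltn_divLR // (mulnC m n).
by rewrite (fget_lt _ h1) (fget_lt _ h2) !ffunE.
Qed.

Lemma Hact_relabel_ones a b : a = b ->
  Hact (relabel a b) (incNZ (onesN a)) = incNZ (onesN b).
Proof.
move=> e; rewrite /relabel Hact_mkmap; last by move=> t; rewrite e.
apply/ffunP => s; rewrite !ffunE.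
have hs : nat_of_ord s < a by rewrite e.
rewrite (bigD1 (Ordinal hs)) //= big1; first by rewrite !ffunE addr0.
move=> t /andP[/eqP [e1] ne]; exfalso; move/negP: ne; apply.
by apply/eqP; apply: val_inj.
Qed.

Lemma Hact_ones_exists N : forall m n (a : {ffun 'I_n -> nat}),
  \sum_(i < n) a i = m -> m <= N ->
  exists f : {ffun 'I_N.+1 -> 'I_n.+1},
    [/\ ptd_map f, Hact f (onesN N) = a & forall t : 'I_N.+1, m < t -> f t = ord0].
Proof.
elim=> [|m IH] n a Hs HN.
  exists [ffun _ => ord0]; split => //.
  - by rewrite /ptd_map ffunE.
  - apply/ffunP => s; rewrite !ffunE big_pred0 => [|t]; last by rewrite ffunE.
    by move: Hs; rewrite (bigD1 s) //=; lia.
  - by move=> t _; rewrite ffunE.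
have [i ai] : exists i, 0 < a i.
  case: (pickP (fun j => 0 < a j)) => [j aj|H]; first by exists j.
  by move: Hs; rewrite big1 // => j _; apply/eqP; rewrite -leqn0 leqNgt H.
pose a' := [ffun j => a j - (j == i)].
have Hs' : \sum_(j < n) a' j = m.
  move: Hs; rewrite (bigD1 i) // [in X in _ -> X](bigD1 i) //= !ffunE eqxx.
  have -> : \sum_(i0 < n | i0 != i) a' i0 = \sum_(i0 < n | i0 != i) a i0.
    by apply: eq_bigr => j /negbTE ne; rewrite ffunE ne subn0.
  have -> : a i - true = a i - 1 by [].
  move: ai; move: (a i) (\sum_(i0 < n | i0 != i) a i0) => x S; lia.
have [f' [pf' Hf' tf']] := IH n a' Hs' (ltnW HN).
have mN : m < N.+1 by lia.
pose f := [ffun t : 'I_N.+1 => if nat_of_ord t == m.+1 then inord i.+1 else f' t].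
exists f; split.
- by rewrite /ptd_map ffunE.
- apply/ffunP => s; rewrite !ffunE.
  have -> : \sum_(t < N | f (inord t.+1) == s.+1 :> nat) onesN N t =
            \sum_(t < N | f' (inord t.+1) == s.+1 :> nat) onesN N t + (s == i).
    rewrite [LHS]big_mkcond [X in _ = X + _]big_mkcond /=.
    have mN' : m < N by lia.
    rewrite (bigD1 (Ordinal mN')) //= [X in _ = X + _](bigD1 (Ordinal mN')) //=.
    rewrite !ffunE inordK // eqxx tf'; last by rewrite inordK.
    rewrite inordK ?ltnS // add0n [RHS]addnC; congr addn.
      rewrite eqSS; case: (s =P i) => [-> | ne]; first by rewrite eqxx.
      by rewrite ifF //; apply/eqP => e; apply: ne; apply: val_inj.
    apply: eq_bigr => t ne; rewrite !ffunE inordK ?ltnS //.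
    have -> : (t.+1 == m.+1) = false.
      by apply/negbTE; move: ne; apply: contra => /eqP [e]; apply/eqP; apply: val_inj.
    by [].
  move: Hf' => /ffunP /(_ s); rewrite !ffunE => ->.
  by case: (s =P i) => [->|_] /=; rewrite ?subn0 ?addn0 // subnK.
- move=> t lt; rewrite ffunE; case: eqP => [e|_]; first by lia.
  by apply: tf'; lia.
Qed.

Theorem mainTheorem3 (R : GammaRing) (r : gs_obj R 2 0) :
  formal_difference_law r ->
  [/\ gr_mul (gs_gact (p_map 2 1) r) (gs_gact (p_map 2 1) r) = gr_one R,
      formal_sum_law (wOf r) &
      discrete R ->
      forall (phi : forall n, {ffun 'I_n -> nat} -> gs_obj R n 0)
             (psi : forall n, {ffun 'I_n -> int} -> gs_obj R n 0),
        is_Hmap phi -> is_Hmap psi ->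
        (forall n, 1 <= n -> phi (2 ^ n) (onesN (2 ^ n)) = powR (wOf r) n) ->
        (forall n, 1 <= n -> psi (2 ^ n) (pm1 n) = powR r n) ->
        forall n (a : {ffun 'I_n -> nat}), phi n a = psi n (incNZ a)].
Proof.
move=> [[h1 _] [h2 _] h3 _].
split.
- exact: part1 h1 h2.
- split; [exact: pw1 h1 h2 | exact: pw2 h1 | ].
  move=> k k1; rewrite powW; apply: sym_from_special.
  + exact: Gk0.
  + exact: G_P1.
  + exact: G_P2.
  + exact: G_P3.
  + exact: G_P4.
  + by apply: h3; rewrite double_gt0.
move=> _ phi psi [ph0 phnat phmul phone] [ps0 psnat psmul psone] Hph Hps n a.
have base : psi 2 (incNZ (onesN 2)) = wOf r.
  rewrite /wOf -(Hps 2) //.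
  rewrite -psnat; last by apply: ptd_mkmap.
  rewrite -psnat; last by apply: ptd_mkmap.
  by rewrite pm1_test.
have ones k : psi (2 ^ k) (incNZ (onesN (2 ^ k))) = powR (wOf r) k.
  elim: k => [|k IH].
    rewrite /= -psone -psnat; last by apply: ptd_mkmap.
    have -> : Hone int = incNZ (onesN 1) by apply/ffunP => t; rewrite !ffunE.
    by rewrite Hact_relabel_ones.
  change (powR (wOf r) k.+1) with
    (gs_gact (relabel (2^k*2) (2^k.+1)) (gr_mul (powR (wOf r) k) (wOf r))).
  rewrite -IH -base -psmul -psnat; last by apply: ptd_mkmap.
  by rewrite Hmul_ones ?expn_gt0 // Hact_relabel_ones // expnSr.
set S := \sum_(i < n) a i.
have hb : S <= 2 ^ S.+1 by rewrite expnS; have := ltn_expl S (isT : 1 < 2); lia.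
have [f [pf Hf _]] := Hact_ones_exists (erefl S) hb.
by rewrite -Hf phnat // Hph // -ones -psnat // Hact_inc.
Qed.
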